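(* There are $15$ syzygetic quadruples. Denote the vanishing order of the differential form $\omega=T\,dz_0\wedge dz_1\wedge dz_2$ (pulled back to $\tilde D$) at $q_\nu=0$ by $k_\nu$. Then one has for $(k_0,k_1,k_2)$ the possibilities $(0,0,0)$ (eight cases), $(1,1,1)$ (one case), $(0,0,1)$ (two cases), $(0,1,0)$ (two cases), $(1,0,0)$ (two cases).
   Context: Genus two, $Z=\begin{pmatrix}z_0&z_1\\ z_1&z_2\end{pmatrix}\in\mathbb{H}_2$. Even theta characteristics $m={a\choose b}\in(\mathbb{Z}/2\mathbb{Z})^4$ (${}^ta\,b=0$), theta constants $\vartheta[m](Z)=\sum_{g\in\mathbb{Z}^2}e^{\pi i(Z[g+a/2]+{}^tb(g+a/2))}$. A syzygetic quadruple is a set of four distinct even characteristics such that the sum of any three is even. For a syzygetic quadruple let $\mathfrak{n}=\{n_1,\dots,n_6\}$ be the complementary even characteristics and $T=T_{\mathfrak{n}}=\prod_{\nu=1}^6\vartheta[n_\nu]$, a cusp form of weight 3 for a conjugate of $\Gamma_{2,0}[2]$ whose character is trivial on $\Gamma_2[4]$. Use the normal coordinates of level 4: $q_0=e^{2\pi i(z_0+z_1)/4}$, $q_2=e^{2\pi i(z_2+z_1)/4}$, $q_1=e^{-2\pi i z_1/4}$; the image $D$ of $\mathbb{H}_2$ is a Reinhardt domain with completion $\tilde D=D\cup\{q\in\mathbb{C}^3;\ q_0q_1q_2=0\}$, which maps locally biholomorphically to Igusa's desingularization $\tilde X(4)$ (monoidal transform along the boundary of the Satake compactification of $\mathbb{H}_2/\Gamma_2[4]$).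 Pulled back to $\tilde D$, $\omega$ becomes $C\,\frac{T}{q_0q_1q_2}\,dq_0\wedge dq_1\wedge dq_2$ with a constant $C$, where $T$ is written as a power series in $q_0,q_1,q_2$. *)

(* Defs.v *)
From HB Require Import structures.
From mathcomp Require Import all_boot all_order all_algebra all_field.
Set Implicit Arguments. Unset Strict Implicit. Unset Printing Implicit Defensive.
Import Order.TTheory GRing.Theory Num.Theory.
Local Open Scope ring_scope.

(* Theta characteristics m = (a;b), a = (a1,a2), b = (b1,b2) in (Z/2Z)^4,
   represented with entries in bool (false = 0, true = 1). *)
Definition char2 : finType := ((bool * bool) * (bool * bool))%type.
Definition ca1 (m : char2) : bool := m.1.1.
Definition ca2 (m : char2) : bool := m.1.2.
Definition cb1 (m : char2) : bool := m.2.1.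
Definition cb2 (m : char2) : bool := m.2.2.

Definition even_char (m : char2) : bool :=
  ~~ addb (ca1 m && cb1 m) (ca2 m && cb2 m).

Definition add_char (m n : char2) : char2 :=
  ((addb (ca1 m) (ca1 n), addb (ca2 m) (ca2 n)),
   (addb (cb1 m) (cb1 n), addb (cb2 m) (cb2 n))).

Definition syzygetic (Q : {set char2}) : bool :=
  [&& #|Q| == 4%N, [forall x in Q, even_char x] &
      [forall x in Q, forall y in Q, forall z in Q,
         [&& x != y, y != z & x != z] ==> even_char (add_char (add_char x y) z)]].

Definition compl_even (Q : {set char2}) : {set char2} :=
  [set n | even_char n & n \notin Q].

(* Formal power series in q0, q1, q2 with exponents in (1/2)N; a series F
   is stored through its DOUBLED exponents: F n0 n1 n2 is the coefficient of
   q0^(n0/2) q1^(n1/2) q2^(n2/2). *)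
Definition qseries := nat -> nat -> nat -> algC.

Definition mulS (F G : qseries) : qseries := fun n0 n1 n2 =>
  \sum_(i0 < n0.+1) \sum_(i1 < n1.+1) \sum_(i2 < n2.+1)
     F i0 i1 i2 * G (n0 - i0)%N (n1 - i1)%N (n2 - i2)%N.

Definition oneS : qseries := fun n0 n1 n2 =>
  if [&& n0 == 0%N, n1 == 0%N & n2 == 0%N] then 1 else 0.

(* q-expansion of theta[m](Z) in the level-4 normal coordinates
   q0 = e(2 pi i (z0+z1)/4), q2 = e(2 pi i (z2+z1)/4), q1 = e(-2 pi i z1/4).
   With y = 2g + a in Z^2 (y = a mod 2) the term of g is
   i^(b.y) q0^(y1^2/2) q1^((y1-y2)^2/2) q2^(y2^2/2).
   The coefficient at doubled exponents (n0,n1,n2) is the (finite) sum over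
   the y with y1^2 = n0, (y1-y2)^2 = n1, y2^2 = n2, y = a mod 2. *)
Definition theta_coef (m : char2) : qseries := fun n0 n1 n2 =>
  \sum_(u < (2 * n0).+1) \sum_(v < (2 * n2).+1)
    let y1 : int := (u : nat)%:Z - n0%:Z in
    let y2 : int := (v : nat)%:Z - n2%:Z in
    if [&& y1 ^+ 2 == n0%:Z, y2 ^+ 2 == n2%:Z, (y1 - y2) ^+ 2 == n1%:Z,
           odd `|y1|%N == ca1 m & odd `|y2|%N == ca2 m]
    then 'i ^ ((cb1 m : nat)%:Z * y1 + (cb2 m : nat)%:Z * y2)
    else 0.

Definition Tser (Q : {set char2}) : qseries :=
  foldr mulS oneS [seq theta_coef n | n <- enum (compl_even Q)].

Definition expo (n : nat * nat * nat) (nu : 'I_3) : nat :=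
  match val nu with 0%N => n.1.1 | 1%N => n.1.2 | _ => n.2 end.

Definition coefS (F : qseries) (n : nat * nat * nat) : algC := F n.1.1 n.1.2 n.2.

(* F vanishes along q_nu = 0 to DOUBLED order d (i.e. to order d/2) *)
Definition vanishing_order2 (F : qseries) (nu : 'I_3) (d : nat) : Prop :=
  (exists n, expo n nu = d /\ coefS F n != 0) /\
  (forall n, (expo n nu < d)%N -> coefS F n = 0).

(* omega pulled back to D~ is C * T/(q0 q1 q2) dq0 dq1 dq2 (C <> 0), so its
   vanishing order along q_nu = 0 is k iff T vanishes there to order k+1. *)
Definition omega_order (Q : {set char2}) (nu : 'I_3) (k : nat) : Prop :=
  vanishing_order2 (Tser Q) nu (2 * k.+1).

(* Main.v *)
Require Import Defs.
From HB Require Import structures.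
From mathcomp Require Import all_boot all_order all_algebra all_field.
From mathcomp Require Import zify.
From Stdlib Require Import FunctionalExtensionality.
Set Implicit Arguments. Unset Strict Implicit. Unset Printing Implicit Defensive.
Import Order.TTheory GRing.Theory Num.Theory.
Definition allc : seq char2 := [:: ((false,false),(false,false)); ((false,false),(false,true)); ((false,false),(true,false)); ((false,false),(true,true)); ((false,true),(false,false)); ((false,true),(false,true)); ((false,true),(true,false)); ((false,true),(true,true)); ((true,false),(false,false)); ((true,false),(false,true)); ((true,false),(true,false)); ((true,false),(true,true)); ((true,true),(false,false)); ((true,true),(false,true)); ((true,true),(true,false)); ((true,true),(true,true))].
Fixpoint allbits n : seq (seq bool) := if n is n'.+1 then map (cons true) (allbits n') ++ map (cons false) (allbits n') else [:: [::]].
Definition idx (x : char2) : nat := match x with ((a1,a2),(b1,b2)) => (if a1 then 8 else 0) + (if a2 then 4 else 0) + (if b1 then 2 else 0) + (if b2 then 1 else 0) end%N.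
Definition bmem (b : seq bool) (x : char2) := nth false b (idx x).
Definition bits (Q : {set char2}) : seq bool := [seq x \in Q | x <- allc].

Lemma mem_allc x : x \in allc. Proof. by case: x => [[[] []] [[] []]]. Qed.
Lemma allc_uniq : uniq allc. Proof. by []. Qed.
Lemma idx_lt x : (idx x < size allc)%N. Proof. by case: x => [[[] []] [[] []]]. Qed.
Lemma nth_idx x0 x : nth x0 allc (idx x) = x. Proof. by case: x => [[[] []] [[] []]]. Qed.

Lemma bmem_bits Q x : bmem (bits Q) x = (x \in Q).
Proof. by rewrite /bmem /bits (nth_map x) ?idx_lt // nth_idx. Qed.

Lemma bmem_bitsE Q : bmem (bits Q) = (fun x => x \in Q).
Proof. apply: functional_extensionality => x; exact: bmem_bits. Qed.

Lemma card_count (T : finType) (s : seq T) (p : pred T) :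
  uniq s -> (forall x, x \in s) -> #|p| = count p s.
Proof.
move=> us ms; rewrite cardE -size_filter; apply: perm_size; apply: uniq_perm.
- exact: enum_uniq.
- by rewrite filter_uniq.
by move=> x; rewrite mem_enum mem_filter ms andbT.
Qed.

Lemma card_allc (p : pred char2) : #|p| = count p allc.
Proof.
rewrite cardE -size_filter; apply: perm_size; apply: uniq_perm.
- exact: enum_uniq.
- by rewrite filter_uniq.
by move=> x; rewrite mem_enum mem_filter mem_allc andbT.
Qed.

Lemma count_enum (a : pred char2) (A : {set char2}) :
  count a (enum A) = count (fun x => a x && (x \in A)) allc.
Proof.
rewrite -(card_allc [pred x | a x && (x \in A)]) -size_filter cardE.
apply: perm_size; apply: uniq_perm.
- by rewrite filter_uniq // enum_uniq.
- exact: enum_uniq.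
by move=> x; rewrite mem_filter !mem_enum inE.
Qed.

Lemma sumn_bool (T : Type) (f : T -> bool) s : sumn [seq (f x : nat) | x <- s] = count f s.
Proof. by elim: s => //= x s ->. Qed.

Lemma allbits_uniq n : uniq (allbits n).
Proof.
elim: n => //= n IH; rewrite cat_uniq !map_inj_uniq //; last 2 first.
  by move=> x y [].
  by move=> x y [].
rewrite IH /= andbT; apply/hasPn => b /mapP [c _ ->]; apply/mapP => -[d _] //.
Qed.

Lemma mem_allbits n b : (b \in allbits n) = (size b == n).
Proof.
elim: n b => [|n IH] [|x b] //=.
- by rewrite mem_cat; apply/negbTE/negP => /orP [] /mapP [].
rewrite mem_cat eqSS -IH; case: x.
- apply/orP/idP => [[/mapP [c c_in [->]] //|/mapP [c _ //]]|h].
  by left; apply/mapP; exists b.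
- apply/orP/idP => [[/mapP [c _ //]|/mapP [c c_in [->]] //]|h].
  by right; apply/mapP; exists b.
Qed.

Lemma bits_inj : injective bits.
Proof. by move=> Q1 Q2 h; apply/setP => x; rewrite -!bmem_bits h. Qed.

Lemma nth_index_map (b : seq bool) : size b = size allc ->
  [seq nth false b (index x allc) | x <- allc] = b.
Proof.
move=> hs; apply: (@eq_from_nth _ false); first by rewrite size_map.
move=> i; rewrite size_map => hi.
rewrite (nth_map ((false,false),(false,false))) // index_uniq //.
Qed.

Lemma count_sets (pc : pred (seq bool)) :
  #|[set Q : {set char2} | pc (bits Q)]| = count pc (allbits 16).
Proof.
rewrite (@card_count _ (enum {set char2})) ?enum_uniq //; last by move=> x; rewrite mem_enum.
rewrite (eq_count (a2 := preim bits pc)); last by move=> Q; exact: (in_set _ Q).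
rewrite -count_map; apply/permP; apply: uniq_perm.
- by rewrite map_inj_uniq ?enum_uniq //; exact: bits_inj.
- exact: allbits_uniq.
move=> b; rewrite mem_allbits; apply/mapP/idP => [[Q _ ->]|hb].
  by rewrite size_map.
exists [set x | nth false b (index x allc)]; first by rewrite mem_enum.
rewrite -[LHS](nth_index_map (eqP hb)) /bits; apply: eq_map => x; by rewrite inE.
Qed.

Definition syzP (mQ : pred char2) :=
 if count mQ allc == 4%N then
 if all (fun x => if mQ x then even_char x else true) allc then
   all (fun x => if mQ x then all (fun y => if mQ y then all (fun z => if mQ z then
     (if [&& x != y, y != z & x != z] then even_char (add_char (add_char x y) z) else true) else true) allc else true) allc else true) allc
 else false else false.

Lemma cardQ (Q : {set char2}) : #|Q| = count (fun x => x \in Q) allc.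
Proof.
rewrite cardE -size_filter; apply: perm_size; apply: uniq_perm.
- exact: enum_uniq.
- by rewrite filter_uniq.
by move=> x; rewrite mem_enum mem_filter mem_allc andbT.
Qed.

Lemma forall_in_all (Q : {set char2}) (P : char2 -> bool) :
  [forall x in Q, P x] = all (fun x => (x \in Q) ==> P x) allc.
Proof.
apply/forall_inP/allP => H x.
  by move=> _; apply/implyP; apply: H.
by move=> xQ; move: (H x (mem_allc x)); rewrite xQ.
Qed.

Lemma syz_eq Q : syzygetic Q = syzP (fun x => x \in Q).
Proof.
rewrite /syzygetic /syzP -!/(_ ==> _) -!/(_ && _) cardQ forall_in_all.
congr [&& _, _ & _].
rewrite forall_in_all; apply: eq_all => x; congr (_ ==> _).
rewrite forall_in_all; apply: eq_all => y; congr (_ ==> _).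
by rewrite forall_in_all.
Qed.

Definition f0 (x : char2) := ca1 x.
Definition f1 (x : char2) := addb (ca1 x) (ca2 x).
Definition f2 (x : char2) := ca2 x.
Definition S (f : char2 -> bool) (Q : {set char2}) : nat :=
  sumn [seq (f n : nat) | n <- enum (compl_even Q)].
Definition Sc (f : char2 -> bool) (mQ : pred char2) : nat :=
  count (fun x => f x && (even_char x && ~~ mQ x)) allc.

Lemma S_eq f Q : S f Q = Sc f (fun x => x \in Q).
Proof.
rewrite /S sumn_bool count_enum /Sc; apply: eq_count => x.
by rewrite inE.
Qed.

Definition kk (Q : {set char2}) : nat * nat * nat :=
  ((S f0 Q)./2.-1, (S f1 Q)./2.-1, (S f2 Q)./2.-1).
Definition kb (b : seq bool) : nat * nat * nat :=
  ((Sc f0 (bmem b))./2.-1, (Sc f1 (bmem b))./2.-1, (Sc f2 (bmem b))./2.-1).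
Definition okS (s : nat) := ~~ odd s && (1 < s)%N.

Definition pcount (t : nat * nat * nat) b := if syzP (bmem b) then kb b == t else false.
Lemma C1 : count (fun b => syzP (bmem b)) (allbits 16) = 15%N.
Proof. vm_compute. reflexivity. Qed.
Lemma C2 : all (fun b => if syzP (bmem b) then [&& okS (Sc f0 (bmem b)), okS (Sc f1 (bmem b)) & okS (Sc f2 (bmem b))] else true) (allbits 16).
Proof. vm_compute. reflexivity. Qed.
Lemma C3 : count (pcount (0,0,0)%N) (allbits 16) = 8%N.
Proof. vm_compute. reflexivity. Qed.
Lemma C4 : count (pcount (1,1,1)%N) (allbits 16) = 1%N.
Proof. vm_compute. reflexivity. Qed.
Lemma C5 : count (pcount (0,0,1)%N) (allbits 16) = 2%N.
Proof. vm_compute. reflexivity. Qed.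
Lemma C6 : count (pcount (0,1,0)%N) (allbits 16) = 2%N.
Proof. vm_compute. reflexivity. Qed.
Lemma C7 : count (pcount (1,0,0)%N) (allbits 16) = 2%N.
Proof. vm_compute. reflexivity. Qed.

Local Open Scope ring_scope.
Ltac thsimp :=
  rewrite /theta_coef !big_ord_recr !big_ord0 /=;
  repeat match goal with |- context [if ?c then _ else _] =>
    let c' := eval vm_compute in c in change c with c'; cbv iota beta end;
  repeat match goal with |- context ['i ^ ?z] =>
    let z' := eval vm_compute in z in progress change z with z' end;
  rewrite /exprz ?add0r ?addr0 ?expr0 ?sqrCi ?invrN1.

Lemma two_neq0 : (1 + 1 : algC) != 0.
Proof. by rewrite -[1 + 1]/(2%:R) pnatr_eq0. Qed.
Lemma mtwo_neq0 : (-1 + -1 : algC) != 0.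
Proof. by rewrite -opprD oppr_eq0 two_neq0. Qed.

Lemma theta_corner (m : char2) : even_char m ->
  theta_coef m (ca1 m) (addb (ca1 m) (ca2 m)) (ca2 m) != 0.
Proof.
case: m => [[[] []] [[] []]] //= _; thsimp;
  by rewrite ?oner_neq0 ?two_neq0 ?mtwo_neq0.
Qed.

Definition Pc (F : qseries) (c0 c1 c2 : nat) :=
  (forall n0 n1 n2, [|| (n0 < c0)%N, (n1 < c1)%N | (n2 < c2)%N] -> F n0 n1 n2 = 0)
  /\ F c0 c1 c2 != 0.

Lemma sq0 (y : int) : y ^+ 2 = (0%N)%:Z -> y = 0.
Proof. by move/eqP; rewrite sqrf_eq0 => /eqP. Qed.

Lemma theta_vanish (m : char2) n0 n1 n2 :
  [|| (n0 < ca1 m)%N, (n1 < addb (ca1 m) (ca2 m))%N | (n2 < ca2 m)%N] ->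
  theta_coef m n0 n1 n2 = 0.
Proof.
move=> h; rewrite /theta_coef; apply: big1 => u _; apply: big1 => v _.
move: (u%:Z - n0%:Z) (v%:Z - n2%:Z) => y1 y2.
case: ifP => // /and5P [/eqP e1 /eqP e2 /eqP e3 /eqP p1 /eqP p2].
have Z1 : n0 = 0%N -> ~~ odd `|y1|%N by move=> n00; move: e1; rewrite n00 => /sq0 ->.
have Z2 : n2 = 0%N -> ~~ odd `|y2|%N by move=> n00; move: e2; rewrite n00 => /sq0 ->.
have Z3 : n1 = 0%N -> odd `|y1|%N = odd `|y2|%N.
  by move=> n00; move: e3; rewrite n00 => /sq0 /eqP; rewrite subr_eq0 => /eqP ->.
exfalso; move: h p1 p2; case: (ca1 m); case: (ca2 m) => //=.
- case/orP => h p1 p2; first by move: (Z1 ltac:(lia)); rewrite p1.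
  by move: (Z2 ltac:(lia)); rewrite p2.
- case/or3P => h p1 p2; first by move: (Z1 ltac:(lia)); rewrite p1.
  + by move: (Z3 ltac:(lia)); rewrite p1 p2.
  by [].
- case/orP => h p1 p2; first by move: (Z3 ltac:(lia)); rewrite p1 p2.
  by move: (Z2 ltac:(lia)); rewrite p2.
Qed.

Lemma sum_single n (j : 'I_n) (f : 'I_n -> algC) :
  (forall i : 'I_n, (i : nat) != j -> f i = 0) -> \sum_(i < n) f i = f j.
Proof.
move=> H; rewrite (bigD1 j) //= big1 ?addr0 // => i ne; apply: H.
all: try by apply: contra ne => /eqP e; apply/eqP/val_inj.
Qed.

Lemma mulS_corner F G a0 a1 a2 b0 b1 b2 :
  Pc F a0 a1 a2 -> Pc G b0 b1 b2 -> Pc (mulS F G) (a0 + b0) (a1 + b1) (a2 + b2).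
Proof.
move=> [FV Fn] [GV Gn]; split.
  move=> n0 n1 n2 h; rewrite /mulS; apply: big1 => i0 _; apply: big1 => i1 _; apply: big1 => i2 _.
  have [hF|hF] := boolP [|| (i0 < a0)%N, (i1 < a1)%N | (i2 < a2)%N].
    by rewrite FV // mul0r.
  rewrite GV ?mulr0 //.
  move: (ltn_ord i0) (ltn_ord i1) (ltn_ord i2) h hF.
  move: (nat_of_ord i0) (nat_of_ord i1) (nat_of_ord i2) => j0 j1 j2.
  case: (ltnP j0 a0); case: (ltnP j1 a1); case: (ltnP j2 a2) => //= *.
  case: (ltnP n0 (a0 + b0)) => *; first by apply/orP; left; lia.
  case: (ltnP n1 (a1 + b1)) => *; first by apply/orP; right; apply/orP; left; lia.
  case: (ltnP n2 (a2 + b2)) => *; first by apply/orP; right; apply/orP; right; lia.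
  exfalso; lia.
have h0 : (a0 < (a0 + b0).+1)%N by lia.
have h1 : (a1 < (a1 + b1).+1)%N by lia.
have h2 : (a2 < (a2 + b2).+1)%N by lia.
rewrite /mulS (@sum_single _ (Ordinal h0)) => [|i0 ne]; last first.
  apply: big1 => i1 _; apply: big1 => i2 _.
  have [hi|hi] := ltnP i0 a0; first by rewrite FV ?mul0r // hi.
  rewrite GV ?mulr0 //; apply/orP; left; move: (ltn_ord i0) ne hi => /=; lia.
rewrite (@sum_single _ (Ordinal h1)) => [|i1 ne]; last first.
  apply: big1 => i2 _.
  have [hi|hi] := ltnP i1 a1; first by rewrite FV ?mul0r // hi orbT.
  rewrite GV ?mulr0 //; apply/orP; right; apply/orP; left; move: (ltn_ord i1) ne hi => /=; lia.
rewrite (@sum_single _ (Ordinal h2)) => [|i2 ne]; last first.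
  have [hi|hi] := ltnP i2 a2; first by rewrite FV ?mul0r // hi !orbT.
  rewrite GV ?mulr0 //; apply/orP; right; apply/orP; right; move: (ltn_ord i2) ne hi => /=; lia.
by rewrite /= !addKn mulf_neq0.
Qed.

Definition cs (f : char2 -> bool) (l : seq char2) : nat := sumn [seq (f n : nat) | n <- l].

Lemma foldr_corner (l : seq char2) : all even_char l ->
  Pc (foldr mulS oneS [seq theta_coef n | n <- l])
     (cs (fun x => ca1 x) l) (cs (fun x => addb (ca1 x) (ca2 x)) l) (cs (fun x => ca2 x) l).
Proof.
elim: l => [|m l IH] /=.
  move=> _; split; last by rewrite /oneS /= oner_neq0.
  by move=> n0 n1 n2; rewrite !ltn0.
case/andP => em /IH {}IH.
apply: mulS_corner => //; split; last exact: theta_corner.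
move=> n0 n1 n2; exact: theta_vanish.
Qed.

Lemma okS_eq s : okS s -> (2 * (s./2.-1).+1)%N = s.
Proof.
case/andP => ev gt; rewrite prednK ?half_gt0 // mul2n -[RHS](odd_double_half s).
by rewrite (negbTE ev) add0n.
Qed.

Lemma Pc_vanish F c0 c1 c2 : Pc F c0 c1 c2 -> forall nu : 'I_3,
  vanishing_order2 F nu (expo (c0, c1, c2) nu).
Proof.
case=> FV Fn; case=> [[|[|[|?]]] ?] //=; (split; [exists (c0, c1, c2); split => // |]);
  move=> [[n0 n1] n2] /= h; apply: FV; rewrite /expo /= in h; by rewrite h ?orbT.
Qed.

Theorem proposition2p4 :
  #|[set Q : {set char2} | syzygetic Q]| = 15%N /\
  exists k : {set char2} -> nat * nat * nat,
    (forall Q, syzygetic Q -> forall nu : 'I_3, omega_order Q nu (expo (k Q) nu)) /\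
    #|[set Q | syzygetic Q & k Q == (0, 0, 0)%N]| = 8%N /\
    #|[set Q | syzygetic Q & k Q == (1, 1, 1)%N]| = 1%N /\
    #|[set Q | syzygetic Q & k Q == (0, 0, 1)%N]| = 2%N /\
    #|[set Q | syzygetic Q & k Q == (0, 1, 0)%N]| = 2%N /\
    #|[set Q | syzygetic Q & k Q == (1, 0, 0)%N]| = 2%N.
Proof.
have cnt : forall t, #|[set Q | syzygetic Q & kk Q == t]| = count (pcount t) (allbits 16).
  move=> t; rewrite -count_sets; apply: eq_card => Q.
  by rewrite !inE /pcount /kb bmem_bitsE -syz_eq /kk !S_eq; case: syzygetic.
split.
  rewrite -C1 -count_sets; apply: eq_card => Q.
  by rewrite !inE bmem_bitsE -syz_eq.
exists kk; split; last by rewrite !cnt C3 C4 C5 C6 C7.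
move=> Q hQ nu.
have ev : all even_char (enum (compl_even Q)).
  by apply/allP => x; rewrite mem_enum inE => /andP [].
have := allP C2 (bits Q); rewrite mem_allbits size_map eqxx bmem_bitsE -syz_eq hQ -!S_eq.
case/(_ isT)/and3P => o0 o1 o2.
have := Pc_vanish (foldr_corner ev) nu.
rewrite /omega_order /Tser.
case: nu => [[|[|[|?]]] ?] //=; rewrite /expo /=.
- by rewrite okS_eq.
- by rewrite okS_eq.
- by rewrite okS_eq.
Qed.
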